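(* Fix $x> 0$, $y>0$. Suppose $B_\nu(x,y)$ is an upper (respectively lower) bound for $P_\nu(x,y)$ for every $\nu>0$. Then for every $\mu>0$ and every integer $n\ge 0$, $$B^{(n)}_{\mu}(x,y)=B_{\mu+n+1}(x,y)+e^{-x-y}\sum_{k=0}^{n}\left(\frac{y}{x}\right)^{\frac{\mu+k}{2}}I_{\mu+k}(2\sqrt{xy})$$ is an upper (respectively lower) bound for $P_\mu(x,y)$. If moreover $B_{\nu}(x,y)\to 0$ as $\nu\to+\infty$, then $B^{(n)}_\mu(x,y)\to P_\mu(x,y)$ as $n\to\infty$.
   Context: For $\mu>0$, $x>0$, $y\ge0$, the generalized Marcum $P$-function is $P_{\mu}(x,y)=x^{\frac12(1-\mu)}\int_0^{y} t^{\frac12(\mu-1)}e^{-t-x}I_{\mu-1}(2\sqrt{xt})\,dt$, where $I_\nu$ is the modified Bessel function of the first kind. *)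

(* Defs.v *)
From Stdlib Require Import Reals Arith Factorial.
From Coquelicot Require Import Coquelicot.
Open Scope R_scope.

Definition Gamma (s : R) : R :=
  RInt_gen (fun t => Rpower t (s - 1) * exp (- t))
           (at_right 0) (Rbar_locally p_infty).

Definition BesselI (nu z : R) : R :=
  Series (fun k : nat =>
    Rpower (z / 2) (2 * INR k + nu) / (INR (fact k) * Gamma (INR k + nu + 1))).

(* Generalized Marcum P-function:
   P_mu(x,y) = x^((1-mu)/2) int_0^y t^((mu-1)/2) e^(-t-x) I_(mu-1)(2 sqrt(x t)) dt,
   the integral taken as an improper Riemann integral from 0^+ to y
   (the integrand may be singular at 0 when 0 < mu < 1). *)
Definition MarcumP (mu x y : R) : R :=
  Rpower x ((1 - mu) / 2) *
  RInt_gen (fun t => Rpower t ((mu - 1) / 2) * exp (- t - x)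
                     * BesselI (mu - 1) (2 * sqrt (x * t)))
           (at_right 0) (at_point y).

Definition Bn (B : R -> R) (mu x y : R) (n : nat) : R :=
  B (mu + INR n + 1) +
  exp (- x - y) * sum_f_R0 (fun k =>
     Rpower (y / x) ((mu + INR k) / 2) * BesselI (mu + INR k) (2 * sqrt (x * y))) n.

(* Main.v *)
Require Import Defs.
From Stdlib Require Import Reals Lra Classical Arith Factorial.
From Coquelicot Require Import Coquelicot.
Open Scope R_scope.

Lemma ball_R (c e v : R) : Rabs (v - c) < e -> ball c e v.
Proof. intros H. exact H. Qed.

Lemma RChasles (f : R -> R) a b c : ex_RInt f a b -> ex_RInt f b c -> RInt f a b + RInt f b c = RInt f a c.
Proof. intros H1 H2. exact (RInt_Chasles f a b c H1 H2). Qed.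

Lemma exC1 (f : R -> R) a b c : a <= b <= c -> ex_RInt f a c -> ex_RInt f a b.
Proof. intros H1 H2. exact (ex_RInt_Chasles_1 f a b c H1 H2). Qed.
Lemma exC2 (f : R -> R) a b c : a <= b <= c -> ex_RInt f a c -> ex_RInt f b c.
Proof. intros H1 H2. exact (ex_RInt_Chasles_2 f a b c H1 H2). Qed.

Lemma mono_left (f : R -> R) (y M : R) : 0 < y ->
  (forall a, 0 < a <= y -> ex_RInt f a y) ->
  (forall t, 0 < t <= y -> 0 <= f t) ->
  (forall a, 0 < a <= y -> RInt f a y <= M) ->
  exists l, is_RInt_gen f (at_right 0) (at_point y) l /\ l <= M /\
     (forall a, 0 < a <= y -> RInt f a y <= l).
Proof.
  intros Hy Hex Hpos HM.
  set (E := fun v => exists a, 0 < a <= y /\ v = RInt f a y).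
  assert (HB : bound E) by (exists M; intros v [a [Ha ->]]; auto).
  assert (HE : exists v, E v) by (exists (RInt f y y); exists y; split; [lra|auto]).
  destruct (completeness E HB HE) as [l [Hub Hlub]].
  assert (Hup : forall a, 0 < a <= y -> RInt f a y <= l) by (intros a Ha; apply Hub; exists a; auto).
  exists l; split; [|split; auto; apply Hlub; intros v [a [Ha ->]]; auto].
  intros P [eps HP].
  assert (Ha0 : exists a0, 0 < a0 <= y /\ l - eps < RInt f a0 y).
  { destruct (classic (exists a0, 0 < a0 <= y /\ l - eps < RInt f a0 y)) as [H|H]; auto.
    exfalso. assert (l <= l - eps). apply Hlub. intros v [a [Ha ->]].
    apply Rnot_lt_le. intros H'. apply H. exists a; auto.
    destruct eps; simpl in *; lra. }
  destruct Ha0 as [a0 [Ha0 Hl]].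
  unfold filtermapi.
  apply Filter_prod with (Q := fun a => 0 < a < a0) (R := fun b => b = y).
  - exists (mkposreal a0 (proj1 Ha0)). intros t Ht Ht0. split; auto.
    change (Rabs (t - 0) < a0) in Ht. rewrite Rminus_0_r, Rabs_pos_eq in Ht; lra.
  - reflexivity.
  - intros a b Ha ->. exists (RInt f a y). split. apply (RInt_correct f a); apply Hex; lra.
    apply HP. apply ball_R.
    assert (Hc : RInt f a a0 + RInt f a0 y = RInt f a y).
    { apply RChasles. apply exC1 with y. lra. apply Hex; lra. apply Hex; lra. }
    assert (0 <= RInt f a a0).
    { apply RInt_ge_0. lra. apply exC1 with y. lra. apply Hex; lra.
      intros t Ht; apply Hpos; lra. }
    assert (RInt f a y <= l) by (apply Hup; lra).
    apply Rabs_def1; lra.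
Qed.

Lemma mono_right (f : R -> R) (c M : R) :
  (forall b, c <= b -> ex_RInt f c b) ->
  (forall t, c <= t -> 0 <= f t) ->
  (forall b, c <= b -> RInt f c b <= M) ->
  exists l, is_RInt_gen f (at_point c) (Rbar_locally p_infty) l /\ l <= M /\
     (forall b, c <= b -> RInt f c b <= l).
Proof.
  intros Hex Hpos HM.
  set (E := fun v => exists b, c <= b /\ v = RInt f c b).
  assert (HB : bound E) by (exists M; intros v [a [Ha ->]]; auto).
  assert (HE : exists v, E v) by (exists (RInt f c c); exists c; split; [lra|auto]).
  destruct (completeness E HB HE) as [l [Hub Hlub]].
  assert (Hup : forall b, c <= b -> RInt f c b <= l) by (intros a Ha; apply Hub; exists a; auto).
  exists l; split; [|split; auto; apply Hlub; intros v [a [Ha ->]]; auto].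
  intros P [eps HP].
  assert (Ha0 : exists b0, c <= b0 /\ l - eps < RInt f c b0).
  { destruct (classic (exists b0, c <= b0 /\ l - eps < RInt f c b0)) as [H|H]; auto.
    exfalso. assert (l <= l - eps). apply Hlub. intros v [a [Ha ->]].
    apply Rnot_lt_le. intros H'. apply H. exists a; auto.
    destruct eps; simpl in *; lra. }
  destruct Ha0 as [b0 [Hb0 Hl]].
  unfold filtermapi.
  apply Filter_prod with (Q := fun a => a = c) (R := fun b => b0 < b).
  - reflexivity.
  - exists b0. auto.
  - intros a b Ha Hb; subst a. exists (RInt f c b). split. apply (RInt_correct f c); apply Hex; lra.
    apply HP. apply ball_R.
    assert (Hc : RInt f c b0 + RInt f b0 b = RInt f c b).
    { apply RChasles. apply Hex; lra.
      apply exC2 with c. lra. apply Hex; lra. }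
    assert (0 <= RInt f b0 b).
    { apply RInt_ge_0. lra. apply exC2 with c. lra. apply Hex; lra.
      intros t Ht; apply Hpos; lra. }
    assert (RInt f c b <= l) by (apply Hup; lra).
    apply Rabs_def1; lra.
Qed.

Lemma der_mult (f g : R -> R) x df dg : is_derive f x df -> is_derive g x dg ->
  is_derive (fun t => f t * g t) x (df * g x + f x * dg).
Proof. intros H1 H2. apply (is_derive_mult f g x df dg H1 H2). intros; apply Rmult_comm. Qed.

Lemma exd_cont (f : R -> R) x : ex_derive f x -> continuous f x.
Proof. intros H. exact (ex_derive_continuous f x H). Qed.

Lemma rpow_derive p t : 0 < t -> is_derive (fun u => Rpower u p) t (p * Rpower t (p-1)).
Proof. intros Ht. apply is_derive_Reals. apply derivable_pt_lim_power; auto. Qed.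

Lemma rpow_cont p t : 0 < t -> continuous (fun u => Rpower u p) t.
Proof. intros Ht. apply exd_cont. eexists. apply rpow_derive; auto. Qed.

Lemma rpow_pos p t : 0 < Rpower t p.
Proof. unfold Rpower. apply exp_pos. Qed.

Lemma expm_derive t : is_derive (fun u => exp (- u)) t (- exp (-t)).
Proof. auto_derive. auto. ring. Qed.

Lemma expm_cont t : continuous (fun u => exp (- u)) t.
Proof. apply exd_cont. eexists. apply expm_derive. Qed.

Lemma cont_mult (f g : R -> R) x : continuous f x -> continuous g x -> continuous (fun t => f t * g t) x.
Proof. intros H1 H2. exact (continuous_mult f g x H1 H2). Qed.

Lemma ln_lt_id u : 0 < u -> ln u < u.
Proof. intros Hu. pose proof (exp_ineq1_le (ln u)). rewrite exp_ln in H; lra. Qed.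

Definition Kc (p : R) := exp (Rmax 0 (p * ln (2 * p))).

Lemma rpow_bound p t : 1 <= t -> Rpower t p <= Kc p * exp (t / 2).
Proof.
  intros Ht. unfold Kc, Rpower. rewrite <- exp_plus.
  destruct (Rle_or_lt 0 (p * ln t - t/2 - Rmax 0 (p * ln (2*p)))) as [H|H]; [|].
  - exfalso.
    destruct (Rle_or_lt p 0) as [Hp|Hp].
    + assert (0 <= ln t) by (rewrite <- ln_1; apply ln_le; lra).
      assert (p * ln t <= 0) by nra. pose proof (Rmax_l 0 (p * ln (2*p))). lra.
    + assert (ln t = ln (2*p) + ln (t / (2*p))).
      { rewrite <- ln_mult by (try apply Rdiv_lt_0_compat; lra). f_equal. field. lra. }
      assert (ln (t/(2*p)) < t/(2*p)) by (apply ln_lt_id; apply Rdiv_lt_0_compat; lra).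
      assert (p * ln (t/(2*p)) < t/2).
      { apply Rlt_le_trans with (p * (t/(2*p))). apply Rmult_lt_compat_l; lra. right; field; lra. }
      pose proof (Rmax_r 0 (p * ln (2*p))). nra.
  - apply Rlt_le, exp_increasing. lra.
Qed.

Definition gI (s t : R) := Rpower t (s - 1) * exp (- t).

Lemma gI_cont s t : 0 < t -> continuous (gI s) t.
Proof. intros Ht. apply cont_mult. apply rpow_cont; auto. apply expm_cont. Qed.

Lemma gI_pos s t : 0 < gI s t.
Proof. unfold gI. apply Rmult_lt_0_compat. apply rpow_pos. apply exp_pos. Qed.

Lemma Rpower_one s : Rpower 1 s = 1.
Proof. unfold Rpower. rewrite ln_1, Rmult_0_r. apply exp_0. Qed.

Lemma int_rpow s a b : 0 < s -> 0 < a <= b ->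
  is_RInt (fun t => Rpower t (s-1)) a b ((Rpower b s - Rpower a s)/s).
Proof.
  intros Hs Hab.
  replace ((Rpower b s - Rpower a s)/s) with (/s * Rpower b s - /s * Rpower a s) by (field; lra).
  apply (is_RInt_derive (fun t => /s * Rpower t s) (fun t => Rpower t (s-1))).
  - intros x Hx. rewrite Rmin_left, Rmax_right in Hx by lra.
    pose proof (is_derive_scal _ x (/s) _ (rpow_derive s x ltac:(lra))).
    replace (/ s * (s * Rpower x (s - 1))) with (Rpower x (s-1)) in H by (field; lra). exact H.
  - intros x Hx. rewrite Rmin_left, Rmax_right in Hx by lra. apply rpow_cont; lra.
Qed.

Lemma exR_cont (f : R -> R) a b : (forall t, Rmin a b <= t <= Rmax a b -> continuous f t) -> ex_RInt f a b.
Proof. intros H. exact (ex_RInt_continuous f a b H). Qed.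

Lemma gI_ex s a b : 0 < a <= b -> ex_RInt (gI s) a b.
Proof. intros H. apply exR_cont. intros t Ht. rewrite Rmin_left, Rmax_right in Ht by lra. apply gI_cont; lra. Qed.

Lemma gI_left s a : 0 < s -> 0 < a <= 1 -> RInt (gI s) a 1 <= 1/s.
Proof.
  intros Hs Ha.
  apply Rle_trans with (RInt (fun t => Rpower t (s-1)) a 1).
  - apply RInt_le. lra. apply gI_ex; lra. eexists; apply int_rpow; lra.
    intros t Ht. unfold gI. rewrite <- (Rmult_1_r (Rpower t (s-1))) at 2.
    apply Rmult_le_compat_l. apply Rlt_le, rpow_pos. rewrite <- exp_0. apply Rlt_le, exp_increasing; lra.
  - rewrite (is_RInt_unique _ _ _ _ (int_rpow s a 1 Hs Ha)). rewrite Rpower_one.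
    pose proof (rpow_pos s a). unfold Rdiv. apply Rmult_le_compat_r. apply Rlt_le, Rinv_0_lt_compat; lra. lra.
Qed.

Lemma int_expm2 (K b : R) : 1 <= b ->
  is_RInt (fun t => K * exp (- t / 2)) 1 b (2 * K * exp (-1/2) - 2 * K * exp (- b / 2)).
Proof.
  intros Hb.
  replace (2 * K * exp (-1/2) - 2 * K * exp (- b / 2)) with ((-2*K*exp(-b/2)) - (-2*K*exp(-1/2))) by ring.
  apply (is_RInt_derive (fun t => -2*K*exp(-t/2)) (fun t => K * exp (- t / 2))).
  - intros x Hx. auto_derive. auto. unfold Rdiv. field.
  - intros x Hx. apply exd_cont. auto_derive. auto.
Qed.

Lemma gI_right s b : 1 <= b -> RInt (gI s) 1 b <= 2 * Kc (s-1).
Proof.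
  intros Hb.
  assert (HK : 0 < Kc (s-1)) by apply exp_pos.
  apply Rle_trans with (RInt (fun t => Kc (s-1) * exp (- t / 2)) 1 b).
  - apply RInt_le. lra. apply gI_ex; lra. eexists; apply int_expm2; lra.
    intros t Ht. unfold gI.
    apply Rle_trans with (Kc (s-1) * exp (t/2) * exp (-t)).
    apply Rmult_le_compat_r. apply Rlt_le, exp_pos. apply rpow_bound; lra.
    rewrite Rmult_assoc, <- exp_plus. right. f_equal. f_equal. field.
  - rewrite (is_RInt_unique _ _ _ _ (int_expm2 (Kc (s-1)) b Hb)).
    assert (exp (-1/2) <= 1) by (rewrite <- exp_0; apply Rlt_le, exp_increasing; lra).
    pose proof (exp_pos (-b/2)). nra.
Qed.

Lemma Gamma_is s : 0 < s ->
  is_RInt_gen (gI s) (at_right 0) (Rbar_locally p_infty) (Gamma s) /\ 0 < Gamma s.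
Proof.
  intros Hs.
  destruct (mono_left (gI s) 1 (1/s) Rlt_0_1) as [l0 [H0 [_ H0']]].
  { intros a Ha; apply gI_ex; lra. }
  { intros t Ht; apply Rlt_le, gI_pos. }
  { intros a Ha; apply gI_left; lra. }
  destruct (mono_right (gI s) 1 (2 * Kc (s-1))) as [l1 [H1 [_ H1']]].
  { intros b Hb; apply gI_ex; lra. }
  { intros t Ht; apply Rlt_le, gI_pos. }
  { intros b Hb; apply gI_right; lra. }
  assert (Hall : is_RInt_gen (gI s) (at_right 0) (Rbar_locally p_infty) (plus l0 l1)).
  { apply (is_RInt_gen_Chasles (gI s) 1); auto. }
  assert (HG : Gamma s = plus l0 l1).
  { unfold Gamma. apply (is_RInt_gen_unique (gI s)). exact Hall. }
  rewrite HG. split; auto.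
  assert (0 <= l0). { apply Rle_trans with (RInt (gI s) 1 1). rewrite RInt_point. right; reflexivity. apply H0'; lra. }
  assert (0 < l1). { apply Rlt_le_trans with (RInt (gI s) 1 2). apply RInt_gt_0. lra.
     intros; apply gI_pos. intros; apply gI_cont; lra. apply H1'; lra. }
  change (0 < l0 + l1). lra.
Qed.


Lemma lim0_rpow s (g : R -> R) C : 0 < s -> (forall t, 0 < t <= 1 -> Rabs (g t) <= C) ->
  filterlim (fun t => Rpower t s * g t) (at_right 0) (locally 0).
Proof.
  intros Hs Hg P [eps HP].
  set (C' := Rabs C + 1).
  assert (HC' : 0 < C') by (unfold C'; pose proof (Rabs_pos C); lra).
  assert (He : 0 < eps / C') by (apply Rdiv_lt_0_compat; [apply cond_pos|lra]).
  set (d := Rmin 1 (Rpower (eps / C') (/s))).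
  assert (Hd : 0 < d) by (apply Rmin_pos; [lra|apply rpow_pos]).
  unfold filterlim, filter_le, filtermap.
  exists (mkposreal d Hd). intros t Ht Ht0. apply HP, ball_R.
  change (Rabs (t - 0) < d) in Ht. rewrite Rminus_0_r, Rabs_pos_eq in Ht by lra.
  assert (t < 1) by (pose proof (Rmin_l 1 (Rpower (eps / C') (/s))); unfold d in Ht; lra).
  assert (t < Rpower (eps / C') (/s)) by (pose proof (Rmin_r 1 (Rpower (eps / C') (/s))); unfold d in Ht; lra).
  assert (Hp : Rpower t s < eps / C').
  { replace (eps / C') with (Rpower (Rpower (eps / C') (/s)) s).
    apply Rlt_Rpower_l; lra.
    rewrite Rpower_mult. replace (/s * s) with 1 by (field; lra). apply Rpower_1; auto. }
  rewrite Rminus_0_r, Rabs_mult, (Rabs_pos_eq (Rpower t s)) by (apply Rlt_le, rpow_pos).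
  assert (Rabs (g t) <= C') by (pose proof (Hg t ltac:(lra)); pose proof (Rle_abs C); unfold C'; lra).
  apply Rle_lt_trans with (Rpower t s * C').
  apply Rmult_le_compat_l; [apply Rlt_le, rpow_pos|auto].
  replace (pos eps) with (eps / C' * C') by (field; lra).
  apply Rmult_lt_compat_r; lra.
Qed.

Lemma liminf_rpow s : filterlim (fun t => Rpower t s * exp (- t)) (Rbar_locally p_infty) (locally 0).
Proof.
  intros P [eps HP].
  assert (HK : 0 < Kc s) by apply exp_pos.
  set (q := eps / (Kc s + 1)).
  assert (Hq : 0 < q) by (apply Rdiv_lt_0_compat; [apply cond_pos|lra]).
  unfold filtermap. exists (Rmax 1 (- 2 * ln q)). intros t Ht.
  apply HP, ball_R.
  assert (1 <= t) by (pose proof (Rmax_l 1 (-2 * ln q)); lra).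
  assert (-2 * ln q < t) by (pose proof (Rmax_r 1 (-2 * ln q)); lra).
  rewrite Rminus_0_r, Rabs_pos_eq by (apply Rlt_le, Rmult_lt_0_compat; [apply rpow_pos|apply exp_pos]).
  apply Rle_lt_trans with (Kc s * exp (t/2) * exp (-t)).
  apply Rmult_le_compat_r; [apply Rlt_le, exp_pos|apply rpow_bound; lra].
  rewrite Rmult_assoc, <- exp_plus.
  assert (exp (t/2 + -t) < q).
  { rewrite <- (exp_ln q) by lra. apply exp_increasing. lra. }
  apply Rle_lt_trans with (Kc s * q). apply Rmult_le_compat_l; lra.
  assert (E : (Kc s + 1) * q = eps) by (unfold q; field; lra).
  nra.
Qed.

Definition phiG (s t : R) := Rpower t s * exp (- t).
Definition dphiG (s t : R) := s * Rpower t (s - 1) * exp (- t) + Rpower t s * (- exp (- t)).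

Lemma phiG_der s t : 0 < t -> is_derive (phiG s) t (dphiG s t).
Proof.
  intros Ht. unfold phiG, dphiG.
  apply (der_mult (fun u => Rpower u s) (fun u => exp (- u))). apply rpow_derive; auto. apply expm_derive.
Qed.

Lemma dphiG_cont s t : 0 < t -> continuous (dphiG s) t.
Proof. intros Ht. apply exd_cont. unfold dphiG, Rpower. auto_derive. lra. Qed.

Lemma Derive_phiG_cont s t : 0 < t -> continuous (Derive (phiG s)) t.
Proof.
  intros Ht. apply continuous_ext_loc with (dphiG s).
  - exists (mkposreal t Ht). intros y Hy. change (Rabs (y - t) < t) in Hy.
    apply Rabs_def2 in Hy. symmetry. apply is_derive_unique. apply phiG_der. lra.
  - apply dphiG_cont; auto.
Qed.

Lemma Gamma_rec s : 0 < s -> Gamma (s + 1) = s * Gamma s.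
Proof.
  intros Hs.
  destruct (Gamma_is s Hs) as [HG _].
  assert (HD : is_RInt_gen (Derive (phiG s)) (at_right 0) (Rbar_locally p_infty) (0 - 0)).
  { apply is_RInt_gen_Derive.
    - apply Filter_prod with (Q := fun a => 0 < a) (R := fun b => 0 < b).
      exists (mkposreal 1 Rlt_0_1); auto. exists 0; auto.
      intros a b Ha Hb x Hx; simpl in Hx. eexists. apply phiG_der.
      pose proof (Rmin_glb_lt a b 0 Ha Hb). lra.
    - apply Filter_prod with (Q := fun a => 0 < a) (R := fun b => 0 < b).
      exists (mkposreal 1 Rlt_0_1); auto. exists 0; auto.
      intros a b Ha Hb x Hx; simpl in Hx. apply Derive_phiG_cont.
      pose proof (Rmin_glb_lt a b 0 Ha Hb). lra.
    - unfold phiG. apply (lim0_rpow s (fun t => exp (- t)) 1 Hs).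
      intros t Ht. rewrite Rabs_pos_eq by (apply Rlt_le, exp_pos).
      rewrite <- exp_0. apply Rlt_le, exp_increasing; lra.
    - apply liminf_rpow. }
  pose proof (is_RInt_gen_scal (gI s) s _ HG) as HS.
  pose proof (is_RInt_gen_minus _ _ _ _ HS HD) as HM.
  change (Gamma (s+1)) with (RInt_gen (gI (s+1)) (at_right 0) (Rbar_locally p_infty)). apply is_RInt_gen_unique.
  replace (s * Gamma s) with (minus (scal s (Gamma s)) (0 - 0)).
  2:{ unfold minus, plus, opp, scal; simpl. unfold mult; simpl. ring. }
  revert HM. apply is_RInt_gen_ext.
  apply Filter_prod with (Q := fun a => 0 < a) (R := fun b => 0 < b).
  exists (mkposreal 1 Rlt_0_1); auto. exists 0; auto.
  intros a b Ha Hb x Hx; simpl in Hx.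
  assert (0 < x) by (pose proof (Rmin_glb_lt a b 0 Ha Hb); lra).
  rewrite (is_derive_unique _ _ _ (phiG_der s x H)).
  unfold minus, plus, opp, scal; simpl. unfold mult; simpl.
  unfold gI, dphiG. replace (s + 1 - 1) with s by ring. ring.
Qed.


Lemma Gamma_pos s : 0 < s -> 0 < Gamma s.
Proof. intros Hs. apply (Gamma_is s Hs). Qed.

Definition aS (nu : R) (k : nat) := / (INR (fact k) * Gamma (INR k + nu + 1)).
Definition Ser (nu u : R) := PSeries (aS nu) u.

Lemma fact_pos k : 0 < INR (fact k).
Proof. apply lt_0_INR. apply lt_O_fact. Qed.

Lemma aS_pos nu k : -1 < nu -> 0 < aS nu k.
Proof.
  intros H. unfold aS. apply Rinv_0_lt_compat, Rmult_lt_0_compat. apply fact_pos.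
  apply Gamma_pos. pose proof (pos_INR k). lra.
Qed.

Lemma aS_shift mu k : 0 < mu -> (mu + INR k) * aS mu k = aS (mu - 1) k.
Proof.
  intros Hmu. unfold aS.
  replace (INR k + mu + 1) with ((INR k + (mu - 1) + 1) + 1) by ring.
  pose proof (pos_INR k).
  rewrite Gamma_rec by lra.
  replace (INR k + (mu - 1) + 1) with (mu + INR k) by ring.
  pose proof (fact_pos k). pose proof (Gamma_pos (mu + INR k) ltac:(lra)).
  field. split; lra.
Qed.

Lemma aS_ratio nu k : -1 < nu -> aS nu (S k) / aS nu k = / ((INR k + 1) * (INR k + nu + 1)).
Proof.
  intros Hnu. unfold aS. rewrite S_INR, fact_simpl, mult_INR, S_INR.
  replace (INR k + 1 + nu + 1) with ((INR k + nu + 1) + 1) by ring.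
  pose proof (pos_INR k).
  rewrite Gamma_rec by lra.
  pose proof (fact_pos k). pose proof (Gamma_pos (INR k + nu + 1) ltac:(lra)).
  field. repeat split; lra.
Qed.

Lemma CV_aS nu : -1 < nu -> CV_radius (aS nu) = p_infty.
Proof.
  intros Hnu. apply CV_radius_infinite_DAlembert.
  - intros n. apply Rgt_not_eq, aS_pos; auto.
  - apply is_lim_seq_le_le with (u := fun _ => 0) (w := fun n => / (nu + 1) * / (INR n + 1)).
    + intros n. rewrite aS_ratio by auto. pose proof (pos_INR n).
      rewrite Rabs_pos_eq by (apply Rlt_le, Rinv_0_lt_compat; nra).
      split. apply Rlt_le, Rinv_0_lt_compat; nra.
      rewrite <- Rinv_mult. apply Rinv_le_contravar. nra. nra.
    + apply is_lim_seq_const.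
    + replace (Finite 0) with (Rbar_mult (/ (nu + 1)) 0) by (simpl; f_equal; ring).
      apply is_lim_seq_scal_l.
      replace (Finite 0) with (Rbar_inv p_infty) by reflexivity.
      apply is_lim_seq_inv. 2: discriminate.
      apply is_lim_seq_ext with (fun n => INR (S n)). intros n; apply S_INR.
      apply (is_lim_seq_incr_1 INR p_infty). apply is_lim_seq_INR.
Qed.

Lemma Ser_ex nu u : -1 < nu -> ex_pseries (aS nu) u.
Proof. intros H. apply CV_radius_inside. rewrite CV_aS; auto. exact I. Qed.

Lemma Ser_exd nu u : -1 < nu -> ex_pseries (PS_derive (aS nu)) u.
Proof. intros H. apply CV_radius_inside. rewrite CV_radius_derive, CV_aS; auto. exact I. Qed.

Lemma Ser_derive nu u : -1 < nu -> is_derive (Ser nu) u (PSeries (PS_derive (aS nu)) u).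
Proof. intros H. apply is_derive_PSeries. rewrite CV_aS; auto. exact I. Qed.

Lemma Ser_cont nu u : -1 < nu -> continuous (Ser nu) u.
Proof. intros H. apply exd_cont. eexists. apply Ser_derive; auto. Qed.

Lemma ex_series_pseries (a : nat -> R) u : ex_pseries a u -> ex_series (fun k => a k * u ^ k).
Proof.
  intros H. apply ex_series_ext with (2 := H). intros n. rewrite pow_n_pow. apply Rmult_comm.
Qed.

Lemma Ser_mono nu u v : -1 < nu -> 0 <= u <= v -> Ser nu u <= Ser nu v.
Proof.
  intros H Huv. unfold Ser, PSeries. apply Series_le.
  - intros n. pose proof (aS_pos nu n H). split.
    apply Rmult_le_pos. lra. apply pow_le; lra.
    apply Rmult_le_compat_l. lra. apply pow_incr; lra.
  - apply ex_series_pseries, Ser_ex; auto.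
Qed.

Lemma Ser_pos nu u : -1 < nu -> 0 <= u -> 0 < Ser nu u.
Proof.
  intros H Hu. apply Rlt_le_trans with (Ser nu 0).
  unfold Ser. rewrite PSeries_0. apply aS_pos; auto.
  apply Ser_mono; auto. lra.
Qed.

Lemma Ser_identity mu u : 0 < mu ->
  mu * Ser mu u + u * PSeries (PS_derive (aS mu)) u = Ser (mu - 1) u.
Proof.
  intros Hmu. unfold Ser.
  rewrite <- PSeries_incr_1, <- PSeries_scal.
  rewrite <- PSeries_plus.
  2:{ apply ex_pseries_scal. apply Rmult_comm. apply Ser_ex; lra. }
  2:{ apply ex_pseries_incr_1. apply Ser_exd; lra. }
  apply PSeries_ext. intros k. rewrite <- aS_shift by auto.
  unfold PS_plus, PS_scal, PS_incr_1, PS_derive. destruct k as [|k].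
  - simpl. unfold plus, scal, zero; simpl. unfold mult; simpl. ring.
  - unfold plus, scal; simpl. unfold mult; simpl. ring.
Qed.

Lemma BesselI_eq nu z : -1 < nu -> 0 < z ->
  BesselI nu z = Rpower (z / 2) nu * Ser nu ((z / 2) ^ 2).
Proof.
  intros Hnu Hz. unfold BesselI, Ser, PSeries. rewrite <- Series_scal_l.
  apply Series_ext. intros k.
  rewrite Rpower_plus. replace (2 * INR k) with (INR (2 * k)) by (rewrite mult_INR; reflexivity).
  rewrite Rpower_pow by lra. rewrite pow_mult. unfold aS. unfold Rdiv. ring.
Qed.


Definition fM (x nu t : R) := Rpower t (nu - 1) * exp (- t) * Ser (nu - 1) (x * t).

Lemma lin_cont (x t : R) : continuous (fun u => x * u) t.
Proof. apply exd_cont. auto_derive. auto. Qed.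

Lemma Ser_comp_cont nu x t : -1 < nu -> continuous (fun u => Ser nu (x * u)) t.
Proof.
  intros H. apply (continuous_comp (fun u => x * u) (Ser nu)). apply lin_cont. apply Ser_cont; auto.
Qed.

Lemma fM_cont x nu t : 0 < nu -> 0 < t -> continuous (fM x nu) t.
Proof.
  intros Hnu Ht. unfold fM. apply (cont_mult (fun u => Rpower u (nu - 1) * exp (- u)) (fun u => Ser (nu-1) (x*u))).
  apply cont_mult. apply rpow_cont; auto. apply expm_cont. apply Ser_comp_cont; lra.
Qed.

Lemma fM_pos x nu t : 0 < nu -> 0 <= x -> 0 < t -> 0 <= fM x nu t.
Proof.
  intros Hnu Hx Ht. unfold fM. apply Rmult_le_pos. apply Rlt_le, Rmult_lt_0_compat. apply rpow_pos. apply exp_pos.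
  apply Rlt_le, Ser_pos. lra. nra.
Qed.

Lemma fM_ex x nu a b : 0 < nu -> 0 < a <= b -> ex_RInt (fM x nu) a b.
Proof. intros Hnu H. apply exR_cont. intros t Ht. rewrite Rmin_left, Rmax_right in Ht by lra. apply fM_cont; lra. Qed.

Lemma J_is x y nu : 0 < x -> 0 < y -> 0 < nu ->
  exists l, is_RInt_gen (fM x nu) (at_right 0) (at_point y) l /\ 0 <= l /\
            l <= Ser (nu - 1) (x * y) * (Rpower y nu / nu).
Proof.
  intros Hx Hy Hnu.
  set (c := Ser (nu - 1) (x * y)).
  assert (Hc : 0 < c) by (apply Ser_pos; nra).
  destruct (mono_left (fM x nu) y (c * (Rpower y nu / nu)) Hy) as [l [H1 [H2 H3]]].
  { intros a Ha. apply fM_ex; lra. }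
  { intros t Ht. apply fM_pos; lra. }
  { intros a Ha.
    assert (HI : is_RInt (fun t => c * Rpower t (nu - 1)) a y (c * ((Rpower y nu - Rpower a nu) / nu))).
    { apply (is_RInt_scal (fun t => Rpower t (nu - 1)) a y c). apply int_rpow; lra. }
    apply Rle_trans with (RInt (fun t => c * Rpower t (nu - 1)) a y).
    - apply RInt_le. lra. apply fM_ex; lra. eexists; exact HI.
      intros t Ht. unfold fM. rewrite (Rmult_comm c).
      apply Rmult_le_compat. apply Rlt_le, Rmult_lt_0_compat. apply rpow_pos. apply exp_pos.
      apply Rlt_le, Ser_pos; nra.
      rewrite <- (Rmult_1_r (Rpower t (nu-1))) at 2.
      apply Rmult_le_compat_l. apply Rlt_le, rpow_pos. rewrite <- exp_0. apply Rlt_le, exp_increasing; lra.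
      apply Ser_mono. lra. split; nra.
    - rewrite (is_RInt_unique _ _ _ _ HI). pose proof (rpow_pos nu a).
      apply Rmult_le_compat_l. lra. unfold Rdiv. apply Rmult_le_compat_r. apply Rlt_le, Rinv_0_lt_compat; lra. lra. }
  exists l. split; auto. split; auto.
  apply Rle_trans with (RInt (fM x nu) y y). rewrite RInt_point. right; reflexivity. apply H3; lra.
Qed.

Definition Jv (x y nu : R) := RInt_gen (fM x nu) (at_right 0) (at_point y).

Lemma Jv_is x y nu : 0 < x -> 0 < y -> 0 < nu ->
  is_RInt_gen (fM x nu) (at_right 0) (at_point y) (Jv x y nu) /\ 0 <= Jv x y nu /\
  Jv x y nu <= Ser (nu - 1) (x * y) * (Rpower y nu / nu).
Proof.
  intros Hx Hy Hnu. destruct (J_is x y nu Hx Hy Hnu) as [l [H1 H2]].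
  assert (E : Jv x y nu = l) by (unfold Jv; apply is_RInt_gen_unique; auto).
  rewrite E. auto.
Qed.

Lemma Marcum_eq x y nu : 0 < x -> 0 < y -> 0 < nu -> MarcumP nu x y = exp (- x) * Jv x y nu.
Proof.
  intros Hx Hy Hnu.
  destruct (Jv_is x y nu Hx Hy Hnu) as [HJ _].
  set (c := exp (- x) * Rpower x ((nu - 1) / 2)).
  assert (H : is_RInt_gen (fun t => Rpower t ((nu - 1) / 2) * exp (- t - x)
                     * BesselI (nu - 1) (2 * sqrt (x * t))) (at_right 0) (at_point y) (scal c (Jv x y nu))).
  { refine (is_RInt_gen_ext (V := R_NormedModule) (fun t => scal c (fM x nu t)) _ _ _ _).
    2: apply (is_RInt_gen_scal (V := R_NormedModule)); exact HJ.
    apply Filter_prod with (Q := fun a => 0 < a) (R := fun b => b = y).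
    exists (mkposreal 1 Rlt_0_1); auto. reflexivity.
    intros a b Ha Hb t Ht; simpl in Ht. subst b. symmetry.
    assert (Ht0 : 0 < t) by (pose proof (Rmin_glb_lt a y 0 Ha Hy); lra).
    assert (Hxt : 0 < x * t) by nra.
    rewrite BesselI_eq by (try lra; pose proof (sqrt_lt_R0 _ Hxt); lra).
    replace (2 * sqrt (x * t) / 2) with (sqrt (x * t)) by field.
    rewrite pow2_sqrt by lra.
    rewrite <- Rpower_sqrt, Rpower_mult by lra.
    rewrite <- Rpower_mult_distr by lra.
    unfold scal; simpl; unfold mult; simpl. unfold c, fM.
    replace (Rpower t (nu - 1)) with (Rpower t ((nu - 1) / 2) * Rpower t (/ 2 * (nu - 1)))
      by (rewrite <- Rpower_plus; f_equal; field).
    replace (Rpower x (/ 2 * (nu - 1))) with (Rpower x ((nu - 1) / 2)) by (f_equal; field).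
    replace (- t - x) with (- x + - t) by ring. rewrite exp_plus. ring. }
  unfold MarcumP. rewrite (is_RInt_gen_unique _ _ H).
  unfold scal; simpl; unfold mult; simpl. unfold c.
  replace (Rpower x ((1 - nu) / 2) * (exp (- x) * Rpower x ((nu - 1) / 2) * Jv x y nu))
    with (exp (- x) * (Rpower x ((1 - nu) / 2) * Rpower x ((nu - 1) / 2)) * Jv x y nu) by ring.
  rewrite <- Rpower_plus. replace ((1 - nu) / 2 + (nu - 1) / 2) with 0 by field.
  rewrite Rpower_O by lra. ring.
Qed.


Definition PhiM (x mu t : R) := Rpower t mu * (exp (- t) * Ser mu (x * t)).

Lemma Ser_comp_der mu x t : -1 < mu ->
  is_derive (fun u => Ser mu (x * u)) t (x * PSeries (PS_derive (aS mu)) (x * t)).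
Proof.
  intros H.
  pose proof (is_derive_comp (Ser mu) (fun u => x * u) t _ x (Ser_derive mu (x * t) H)) as D.
  assert (Dx : is_derive (fun u : R => x * u) t x) by (auto_derive; auto; ring).
  specialize (D Dx). exact D.
Qed.

Lemma PhiM_der x mu t : 0 < mu -> 0 < t ->
  is_derive (PhiM x mu) t (fM x mu t - fM x (mu + 1) t).
Proof.
  intros Hmu Ht.
  assert (D : is_derive (PhiM x mu) t
     (mu * Rpower t (mu - 1) * (exp (- t) * Ser mu (x * t)) +
      Rpower t mu * (- exp (- t) * Ser mu (x * t) + exp (- t) * (x * PSeries (PS_derive (aS mu)) (x * t))))).
  { unfold PhiM. apply (der_mult (fun u => Rpower u mu) (fun u => exp (- u) * Ser mu (x * u))).
    apply rpow_derive; auto.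
    apply (der_mult (fun u => exp (- u)) (fun u => Ser mu (x * u))). apply expm_derive.
    apply Ser_comp_der; lra. }
  replace (fM x mu t - fM x (mu + 1) t) with
     (mu * Rpower t (mu - 1) * (exp (- t) * Ser mu (x * t)) +
      Rpower t mu * (- exp (- t) * Ser mu (x * t) + exp (- t) * (x * PSeries (PS_derive (aS mu)) (x * t)))).
  exact D.
  unfold fM. replace (mu + 1 - 1) with mu by ring.
  rewrite <- Ser_identity by auto.
  assert (E : Rpower t mu = Rpower t (mu - 1) * Rpower t 1) by (rewrite <- Rpower_plus; f_equal; ring).
  rewrite Rpower_1 in E by auto. rewrite E. ring.
Qed.

Lemma fM_cont' x mu t : 0 < mu -> 0 < t -> continuous (fun u => fM x mu u - fM x (mu + 1) u) t.
Proof.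
  intros Hmu Ht. apply (continuous_minus (fM x mu) (fM x (mu+1))).
  apply fM_cont; auto. apply fM_cont; lra.
Qed.

Lemma Derive_PhiM_cont x mu t : 0 < mu -> 0 < t -> continuous (Derive (PhiM x mu)) t.
Proof.
  intros Hmu Ht. apply continuous_ext_loc with (fun u => fM x mu u - fM x (mu + 1) u).
  - exists (mkposreal t Ht). intros y Hy. change (Rabs (y - t) < t) in Hy.
    apply Rabs_def2 in Hy. symmetry. apply is_derive_unique. apply PhiM_der; lra.
  - apply fM_cont'; auto.
Qed.

Lemma Jv_rec x y mu : 0 < x -> 0 < y -> 0 < mu ->
  Jv x y mu = Jv x y (mu + 1) + Rpower y mu * (exp (- y) * Ser mu (x * y)).
Proof.
  intros Hx Hy Hmu.
  destruct (Jv_is x y (mu + 1) Hx Hy ltac:(lra)) as [HJ _].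
  assert (HD : is_RInt_gen (Derive (PhiM x mu)) (at_right 0) (at_point y) (PhiM x mu y - 0)).
  { apply is_RInt_gen_Derive.
    - apply Filter_prod with (Q := fun a => 0 < a) (R := fun b => b = y).
      exists (mkposreal 1 Rlt_0_1); auto. reflexivity.
      intros a b Ha Hb t Ht; simpl in Ht. subst b. eexists. apply PhiM_der. auto.
      pose proof (Rmin_glb_lt a y 0 Ha Hy). lra.
    - apply Filter_prod with (Q := fun a => 0 < a) (R := fun b => b = y).
      exists (mkposreal 1 Rlt_0_1); auto. reflexivity.
      intros a b Ha Hb t Ht; simpl in Ht. subst b. apply Derive_PhiM_cont. auto.
      pose proof (Rmin_glb_lt a y 0 Ha Hy). lra.
    - unfold PhiM. apply (lim0_rpow mu (fun t => exp (- t) * Ser mu (x * t)) (Ser mu x) Hmu).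
      intros t Ht. rewrite Rabs_pos_eq.
      2:{ apply Rlt_le, Rmult_lt_0_compat. apply exp_pos. apply Ser_pos; nra. }
      rewrite <- (Rmult_1_l (Ser mu x)). apply Rmult_le_compat.
      apply Rlt_le, exp_pos. apply Rlt_le, Ser_pos; nra.
      rewrite <- exp_0. apply Rlt_le, exp_increasing; lra.
      apply Ser_mono. lra. split; nra.
    - intros P HP. exact (locally_singleton _ _ HP). }
  pose proof (is_RInt_gen_plus _ _ _ _ HJ HD) as HS.
  unfold Jv at 1. apply is_RInt_gen_unique.
  replace (Jv x y (mu + 1) + Rpower y mu * (exp (- y) * Ser mu (x * y)))
    with (plus (Jv x y (mu + 1)) (PhiM x mu y - 0)) by (unfold plus; simpl; unfold PhiM; ring).
  refine (is_RInt_gen_ext (V := R_NormedModule) _ _ _ _ HS).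
  apply Filter_prod with (Q := fun a => 0 < a) (R := fun b => b = y).
  exists (mkposreal 1 Rlt_0_1); auto. reflexivity.
  intros a b Ha Hb t Ht; simpl in Ht. subst b.
  assert (0 < t) by (pose proof (Rmin_glb_lt a y 0 Ha Hy); lra).
  rewrite (is_derive_unique _ _ _ (PhiM_der x mu t Hmu H)).
  unfold plus; simpl. ring.
Qed.


Lemma term_eq x y nu : 0 < x -> 0 < y -> 0 < nu ->
  exp (- x - y) * (Rpower (y / x) (nu / 2) * BesselI nu (2 * sqrt (x * y))) =
  exp (- x) * (Rpower y nu * (exp (- y) * Ser nu (x * y))).
Proof.
  intros Hx Hy Hnu.
  assert (Hxy : 0 < x * y) by nra.
  pose proof (sqrt_lt_R0 _ Hxy).
  rewrite BesselI_eq by lra.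
  replace (2 * sqrt (x * y) / 2) with (sqrt (x * y)) by field.
  rewrite pow2_sqrt by lra.
  rewrite <- Rpower_sqrt, Rpower_mult by lra.
  rewrite <- Rpower_mult_distr by lra.
  unfold Rdiv at 1. rewrite <- Rpower_mult_distr by (try apply Rinv_0_lt_compat; lra).
  assert (Hi : Rpower (/ x) (nu / 2) = / Rpower x (nu / 2)).
  { unfold Rpower. rewrite ln_Rinv by lra. rewrite <- exp_Ropp. f_equal. ring. }
  rewrite Hi.
  replace (/ 2 * nu) with (nu / 2) by field.
  assert (Hy2 : Rpower y nu = Rpower y (nu / 2) * Rpower y (nu / 2)) by (rewrite <- Rpower_plus; f_equal; field).
  rewrite Hy2.
  replace (- x - y) with (- x + - y) by ring. rewrite exp_plus.
  pose proof (rpow_pos (nu / 2) x). field. lra.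
Qed.

Lemma Marcum_rec x y nu : 0 < x -> 0 < y -> 0 < nu ->
  MarcumP nu x y = MarcumP (nu + 1) x y +
     exp (- x - y) * (Rpower (y / x) (nu / 2) * BesselI nu (2 * sqrt (x * y))).
Proof.
  intros Hx Hy Hnu. rewrite term_eq by auto.
  rewrite !Marcum_eq by lra. rewrite Jv_rec by auto. ring.
Qed.

Lemma Marcum_tele x y mu n : 0 < x -> 0 < y -> 0 < mu ->
  MarcumP mu x y = MarcumP (mu + INR n + 1) x y + exp (- x - y) * sum_f_R0 (fun k =>
     Rpower (y / x) ((mu + INR k) / 2) * BesselI (mu + INR k) (2 * sqrt (x * y))) n.
Proof.
  intros Hx Hy Hmu. induction n as [|n IH].
  - simpl sum_f_R0. replace (mu + INR 0) with mu by (simpl; ring).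
  - simpl sum_f_R0. rewrite Rplus_0_r. apply Marcum_rec; auto.
  - rewrite tech5, S_INR. rewrite IH.
    pose proof (pos_INR n).
    rewrite (Marcum_rec x y (mu + INR n + 1)) by lra.
    replace (mu + INR n + 1) with (mu + (INR n + 1)) by ring. ring.
Qed.

Lemma Gamma_ge_fact s k : 1 <= s -> Gamma s * INR (fact k) <= Gamma (s + INR k).
Proof.
  intros Hs. induction k as [|k IH].
  - simpl. rewrite Rplus_0_r. lra.
  - rewrite S_INR, fact_simpl, mult_INR, S_INR.
    replace (s + (INR k + 1)) with ((s + INR k) + 1) by ring.
    pose proof (pos_INR k).
    rewrite Gamma_rec by lra.
    pose proof (Gamma_pos s ltac:(lra)). pose proof (fact_pos k).
    assert (0 <= Gamma s * INR (fact k)) by nra.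
    nra.
Qed.

Lemma fact_ge1 k : 1 <= INR (fact k).
Proof. replace 1 with (INR 1) by reflexivity. apply le_INR. apply lt_O_fact. Qed.

Lemma Gamma_ge s k : 1 <= s -> Gamma s <= Gamma (s + INR k).
Proof.
  intros Hs. pose proof (Gamma_ge_fact s k Hs). pose proof (fact_ge1 k).
  pose proof (Gamma_pos s ltac:(lra)). nra.
Qed.

Lemma exp_ser_ex u : ex_series (fun k => / INR (fact k) * u ^ k).
Proof. apply ex_series_pseries. eexists. apply is_exp_Reals. Qed.

Lemma Ser_bound nu u : 1 <= nu -> 0 <= u -> Ser (nu - 1) u <= exp u / Gamma nu.
Proof.
  intros Hnu Hu. pose proof (Gamma_pos nu ltac:(lra)) as HG.
  unfold Rdiv. rewrite Rmult_comm, exp_Reals. unfold PSeries, Ser.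
  rewrite <- Series_scal_l. apply Series_le.
  - intros k. pose proof (aS_pos (nu - 1) k ltac:(lra)). split.
    apply Rmult_le_pos. lra. apply pow_le; lra.
    rewrite <- Rmult_assoc. apply Rmult_le_compat_r. apply pow_le; lra.
    unfold aS. replace (INR k + (nu - 1) + 1) with (nu + INR k) by ring.
    pose proof (fact_pos k). pose proof (Gamma_ge nu k Hnu).
    rewrite Rinv_mult. rewrite Rmult_comm. apply Rmult_le_compat_r.
    apply Rlt_le, Rinv_0_lt_compat; lra.
    apply Rinv_le_contravar; lra.
  - apply (ex_series_scal_l (/ Gamma nu) _ (exp_ser_ex u)).
Qed.

Lemma Marcum_nonneg x y nu : 0 < x -> 0 < y -> 0 < nu -> 0 <= MarcumP nu x y.
Proof.
  intros Hx Hy Hnu. rewrite Marcum_eq by auto.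
  destruct (Jv_is x y nu Hx Hy Hnu) as [_ [H _]]. pose proof (exp_pos (- x)). nra.
Qed.

Lemma Marcum_decay x y mu : 0 < x -> 0 < y -> 0 < mu ->
  is_lim_seq (fun n => MarcumP (mu + INR n + 1) x y) 0.
Proof.
  intros Hx Hy Hmu.
  set (C := exp (- x) * exp (x * y) * Rpower y mu / Gamma (mu + 1)).
  apply is_lim_seq_le_le with (u := fun _ => 0)
     (w := fun n => C * (/ INR (fact (S n)) * y ^ (S n))).
  - intros n. pose proof (pos_INR n). set (nu := mu + INR n + 1).
    split. apply Marcum_nonneg; auto; unfold nu; lra.
    rewrite Marcum_eq by (unfold nu; lra).
    destruct (Jv_is x y nu Hx Hy ltac:(unfold nu; lra)) as [_ [H0 H1]].
    pose proof (Ser_bound nu (x * y) ltac:(unfold nu; lra) ltac:(nra)) as HS.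
    pose proof (Gamma_pos nu ltac:(unfold nu; lra)) as HGn.
    pose proof (Gamma_ge_fact (mu + 1) (S n) ltac:(lra)) as HF.
    replace (mu + 1 + INR (S n)) with (nu + 1) in HF by (unfold nu; rewrite S_INR; ring).
    rewrite (Gamma_rec nu) in HF by (unfold nu; lra).
    pose proof (Gamma_pos (mu + 1) ltac:(lra)) as HG1.
    pose proof (fact_pos (S n)) as HfS.
    assert (Hyn : Rpower y nu = Rpower y mu * y ^ (S n)).
    { unfold nu. rewrite <- Rpower_pow by lra. rewrite <- Rpower_plus. f_equal. rewrite S_INR. ring. }
    assert (Hnu : 0 < nu) by (unfold nu; lra).
    pose proof (rpow_pos nu y). pose proof (exp_pos (- x)). pose proof (exp_pos (x * y)).
    apply Rle_trans with (exp (- x) * ((exp (x * y) / Gamma nu) * (Rpower y nu / nu))).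
    { apply Rmult_le_compat_l. lra. apply Rle_trans with (1 := H1).
      apply Rmult_le_compat_r. apply Rlt_le, Rdiv_lt_0_compat; lra. exact HS. }
    replace (exp (- x) * (exp (x * y) / Gamma nu * (Rpower y nu / nu))) with
      (exp (- x) * exp (x * y) * Rpower y nu / (nu * Gamma nu)) by (field; lra).
    unfold C. rewrite Hyn.
    replace (exp (- x) * exp (x * y) * Rpower y mu / Gamma (mu + 1) * (/ INR (fact (S n)) * y ^ S n))
      with (exp (- x) * exp (x * y) * (Rpower y mu * y ^ S n) / (Gamma (mu + 1) * INR (fact (S n))))
      by (field; lra).
    pose proof (rpow_pos mu y). pose proof (pow_lt y (S n) Hy).
    unfold Rdiv. apply Rmult_le_compat_l. apply Rmult_le_pos; [nra|nra].
    apply Rinv_le_contravar. nra. lra.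
  - apply is_lim_seq_const.
  - replace (Finite 0) with (Rbar_mult C 0) by (simpl; f_equal; ring).
    apply is_lim_seq_scal_l.
    apply (is_lim_seq_incr_1 (fun n => / INR (fact n) * y ^ n)).
    apply ex_series_lim_0, exp_ser_ex.
Qed.


Lemma B_lim (B : R -> R) mu : 0 < mu -> is_lim B p_infty 0 ->
  is_lim_seq (fun n => B (mu + INR n + 1)) 0.
Proof.
  intros Hmu HB. apply (is_lim_comp_seq B (fun n => mu + INR n + 1) p_infty 0 HB).
  - exists 0%nat. intros n _. discriminate.
  - apply is_lim_seq_le_p_loc with INR. exists 0%nat. intros n _. lra.
    apply is_lim_seq_INR.
Qed.

Lemma conv_lemma (B : R -> R) x y mu : 0 < x -> 0 < y -> 0 < mu -> is_lim B p_infty 0 ->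
  is_lim_seq (fun n => Bn B mu x y n) (MarcumP mu x y).
Proof.
  intros Hx Hy Hmu Hlim.
  apply is_lim_seq_ext with (fun n => MarcumP mu x y + (B (mu + INR n + 1) - MarcumP (mu + INR n + 1) x y)).
  { intros n. unfold Bn. rewrite (Marcum_tele x y mu n) by auto. ring. }
  replace (Finite (MarcumP mu x y)) with (Finite (MarcumP mu x y + (0 - 0))) by (f_equal; ring).
  apply is_lim_seq_plus'. apply is_lim_seq_const. apply is_lim_seq_minus'.
  apply B_lim; auto. apply Marcum_decay; auto.
Qed.

Theorem proposition2 (x y : R) (hx : 0 < x) (hy : 0 < y) :
  (* upper bounds *)
  (forall B : R -> R,
     (forall nu, 0 < nu -> MarcumP nu x y <= B nu) ->
     (forall mu, 0 < mu -> forall n : nat, MarcumP mu x y <= Bn B mu x y n) /\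
     (is_lim B p_infty 0 ->
        forall mu, 0 < mu -> is_lim_seq (fun n => Bn B mu x y n) (MarcumP mu x y))) /\
  (* lower bounds *)
  (forall B : R -> R,
     (forall nu, 0 < nu -> B nu <= MarcumP nu x y) ->
     (forall mu, 0 < mu -> forall n : nat, Bn B mu x y n <= MarcumP mu x y) /\
     (is_lim B p_infty 0 ->
        forall mu, 0 < mu -> is_lim_seq (fun n => Bn B mu x y n) (MarcumP mu x y))).
Proof.
  split; intros B HB; split.
  - intros mu Hmu n. rewrite (Marcum_tele x y mu n) by auto. unfold Bn.
    apply Rplus_le_compat_r. apply HB. pose proof (pos_INR n). lra.
  - intros Hlim mu Hmu. apply conv_lemma; auto.
  - intros mu Hmu n. rewrite (Marcum_tele x y mu n) by auto. unfold Bn.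
    apply Rplus_le_compat_r. apply HB. pose proof (pos_INR n). lra.
  - intros Hlim mu Hmu. apply conv_lemma; auto.
Qed.
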